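(* Let $V=\mathbb{C}^4$, with basis $e_1,\dots,e_4$ and dual basis $\alpha_1,\dots,\alpha_4$. Let $$T_4=\sum_{1\le i<j\le 4}\big(\alpha_i\otimes\alpha_j-\alpha_j\otimes\alpha_i\big)\otimes(e_i\wedge e_j)\in V^*\otimes V^*\otimes\Lambda^2V\cong\mathbb{C}^4\otimes\mathbb{C}^4\otimes\mathbb{C}^6.$$ Then $\underline{R}(T_4)=8$.
   Context: The border rank $\underline{R}(T)$ is the smallest $r$ such that $T$ is a limit of sums of $r$ rank-one tensors. *)

(* Defs.v *)
From HB Require Import structures.
From mathcomp Require Import all_boot all_order all_algebra.
From mathcomp Require Import reals.
From mathcomp Require Export complex.
Set Implicit Arguments. Unset Strict Implicit. Unset Printing Implicit Defensive.
Import Order.TTheory GRing.Theory Num.Theory.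
Local Open Scope ring_scope.

Definition tensor (F : Type) (I J K : finType) := I -> J -> K -> F.

Definition rank_le (F : nzRingType) (I J K : finType) (r : nat)
  (T : tensor F I J K) : Prop :=
  exists (a : 'I_r -> I -> F) (b : 'I_r -> J -> F) (c : 'I_r -> K -> F),
    forall i j k, T i j k = \sum_(l < r) a l i * b l j * c l k.

(* T is a limit of sums of r rank-one tensors (Euclidean topology,
   expressed with the entrywise sup-norm). *)
Definition border_rank_le (F : numFieldType) (I J K : finType) (r : nat)
  (T : tensor F I J K) : Prop :=
  forall eps : F, 0 < eps ->
    exists T' : tensor F I J K, rank_le r T' /\
      forall i j k, `|T i j k - T' i j k| < eps.

(* Index set {(i,j) : i < j} of the basis e_i /\ e_j of Lambda^2 C^4. *)
Definition pair4 := {p : 'I_4 * 'I_4 | (p.1 < p.2)%N}.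

Definition T4 (R : rcfType) : tensor R[i] 'I_4 'I_4 pair4 :=
  fun a b k =>
    if (a, b) == val k then 1
    else if (b, a) == val k then -1
    else 0.

(* Main.v *)
Require Import Defs.
From HB Require Import structures.
From mathcomp Require Import all_boot all_order all_algebra.
From mathcomp Require Import reals complex.
From mathcomp Require Import ring zify.
Import Order.TTheory GRing.Theory Num.Theory.
Local Open Scope ring_scope.
Set Implicit Arguments. Unset Strict Implicit. Unset Printing Implicit Defensive.

(* Lower bound: Koszul flattening T4^{wedge 2}_A (24 x 24, full rank,
   each rank-one tensor contributes rank <= 3); upper bound: explicit degeneration. *)

Definition o4 (n : nat) : 'I_4 :=
  match n with 0 => @Ordinal 4 0 isT | 1 => @Ordinal 4 1 isT
  | 2 => @Ordinal 4 2 isT | _ => @Ordinal 4 3 isT end.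

Definition pairN (g : nat) : nat * nat :=
  match g with 0 => (0,1) | 1 => (0,2) | 2 => (0,3) | 3 => (1,2) | 4 => (1,3) | _ => (2,3) end%N.

Definition pr6 (g : nat) : pair4 :=
  match g with
  | 0 => exist _ (o4 0, o4 1) isT
  | 1 => exist _ (o4 0, o4 2) isT
  | 2 => exist _ (o4 0, o4 3) isT
  | 3 => exist _ (o4 1, o4 2) isT
  | 4 => exist _ (o4 1, o4 3) isT
  | _ => exist _ (o4 2, o4 3) isT end.

Definition sv {R : pzRingType} (k : nat) : R :=
  match k with 0 => 0 | 1 => 1 | _ => -1 end.

Definition coefN (s m i : nat) : nat :=
  let (p, q) := pairN s in
  if [|| i == p, i == q, m == p, m == q, i == m | 3 < i]%N then 0%N
  else if odd ((p < i) + (q < i))%N then 2%N else 1%N.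

Definition t4N (a b g : nat) : nat :=
  let (p, q) := pairN g in
  if (a == p) && (b == q) then 1%N else if (b == p) && (a == q) then 2%N else 0%N.
Definition Ntab : list (list nat) := [::
  [:: 0; 0; 0; 0; 0; 0; 0; 0; 0; 0; 0; 0; 0; 0; 0; 0; 0; 0; 0; 0; 2; 0; 0; 0];
  [:: 0; 0; 0; 0; 0; 0; 0; 0; 0; 0; 0; 0; 0; 0; 0; 0; 1; 0; 0; 0; 0; 0; 0; 0];
  [:: 0; 0; 0; 0; 0; 0; 0; 0; 0; 0; 0; 0; 2; 0; 0; 0; 0; 0; 0; 0; 0; 0; 0; 0];
  [:: 0; 0; 0; 0; 0; 0; 0; 0; 4; 0; 0; 0; 0; 0; 0; 0; 0; 3; 0; 0; 0; 0; 3; 0];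
  [:: 0; 0; 0; 0; 3; 0; 0; 0; 0; 0; 0; 0; 0; 4; 0; 0; 0; 0; 0; 0; 0; 0; 0; 3];
  [:: 4; 0; 0; 0; 0; 0; 0; 0; 0; 0; 0; 0; 0; 0; 4; 0; 0; 0; 0; 4; 0; 0; 0; 0];
  [:: 0; 0; 0; 0; 0; 0; 0; 0; 0; 0; 0; 0; 0; 0; 0; 0; 0; 0; 0; 0; 0; 1; 0; 0];
  [:: 0; 0; 0; 0; 0; 0; 0; 0; 3; 0; 0; 0; 0; 0; 0; 0; 0; 4; 0; 0; 0; 0; 3; 0];
  [:: 0; 0; 0; 0; 4; 0; 0; 0; 0; 0; 0; 0; 0; 3; 0; 0; 0; 0; 0; 0; 0; 0; 0; 3];
  [:: 0; 0; 0; 0; 0; 0; 0; 0; 0; 1; 0; 0; 0; 0; 0; 0; 0; 0; 0; 0; 0; 0; 0; 0];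
  [:: 0; 0; 0; 0; 0; 2; 0; 0; 0; 0; 0; 0; 0; 0; 0; 0; 0; 0; 0; 0; 0; 0; 0; 0];
  [:: 0; 3; 0; 0; 0; 0; 4; 0; 0; 0; 0; 4; 0; 0; 0; 0; 0; 0; 0; 0; 0; 0; 0; 0];
  [:: 0; 0; 0; 0; 0; 0; 0; 0; 3; 0; 0; 0; 0; 0; 0; 0; 0; 3; 0; 0; 0; 0; 4; 0];
  [:: 0; 0; 0; 0; 0; 0; 0; 0; 0; 0; 0; 0; 0; 0; 0; 0; 0; 0; 1; 0; 0; 0; 0; 0];
  [:: 4; 0; 0; 0; 0; 0; 0; 0; 0; 0; 0; 0; 0; 0; 4; 0; 0; 0; 0; 3; 0; 0; 0; 0];
  [:: 0; 0; 0; 0; 0; 0; 0; 0; 0; 0; 2; 0; 0; 0; 0; 0; 0; 0; 0; 0; 0; 0; 0; 0];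
  [:: 0; 4; 0; 0; 0; 0; 3; 0; 0; 0; 0; 4; 0; 0; 0; 0; 0; 0; 0; 0; 0; 0; 0; 0];
  [:: 0; 0; 2; 0; 0; 0; 0; 0; 0; 0; 0; 0; 0; 0; 0; 0; 0; 0; 0; 0; 0; 0; 0; 0];
  [:: 0; 0; 0; 0; 3; 0; 0; 0; 0; 0; 0; 0; 0; 3; 0; 0; 0; 0; 0; 0; 0; 0; 0; 3];
  [:: 4; 0; 0; 0; 0; 0; 0; 0; 0; 0; 0; 0; 0; 0; 3; 0; 0; 0; 0; 4; 0; 0; 0; 0];
  [:: 0; 0; 0; 0; 0; 0; 0; 0; 0; 0; 0; 0; 0; 0; 0; 1; 0; 0; 0; 0; 0; 0; 0; 0];
  [:: 0; 4; 0; 0; 0; 0; 4; 0; 0; 0; 0; 3; 0; 0; 0; 0; 0; 0; 0; 0; 0; 0; 0; 0];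
  [:: 0; 0; 0; 0; 0; 0; 0; 2; 0; 0; 0; 0; 0; 0; 0; 0; 0; 0; 0; 0; 0; 0; 0; 0];
  [:: 0; 0; 0; 1; 0; 0; 0; 0; 0; 0; 0; 0; 0; 0; 0; 0; 0; 0; 0; 0; 0; 0; 0; 0]
].

Definition nv {R : fieldType} (k : nat) : R :=
  match k with 0 => 0 | 1 => 1 | 2 => -1 | 3 => 2^-1 | _ => - 2^-1 end.
Definition nv2 (k : nat) : int :=
  match k with 0 => 0 | 1 => 2 | 2 => -2 | 3 => 1 | _ => -1 end.

Definition Nc (c r : nat) : nat := nth 0%N (nth [::] Ntab c) r.

Fixpoint sumN (n : nat) (f : nat -> int) : int :=
  match n with 0 => 0 | n.+1 => sumN n f + f n end.

Definition K4Z (r c : nat) : int :=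
  sumN 4 (fun i => sv (coefN (r %/ 4) (c %/ 6) i) * sv (t4N i (r %% 4) (c %% 6))).

Definition check_inv : bool :=
  all (fun r => all (fun r' =>
    sumN 24 (fun c => nv2 (Nc c r) * K4Z r' c) == (if r == r' then 2 else 0))
    (iota 0 24)) (iota 0 24).

Lemma check_invP : check_inv = true.
Proof. vm_compute. reflexivity. Qed.


Lemma sumN_big (f : nat -> int) n : sumN n f = \sum_(i < n) f i.
Proof. by elim: n => [|n IH] /=; rewrite ?big_ord0 // big_ord_recr IH. Qed.

Section Low.
Variable R : realType.
Local Notation C := R[i].

Lemma svZ k : ((sv k : int)%:~R : C) = sv k.
Proof. by case: k => [|[|k]] //=; rewrite ?mulr0z ?mulr1z // mulrN1z. Qed.

Lemma nvZ k : (nv k : C) = (nv2 k)%:~R / 2.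
Proof.
case: k => [|[|[|[|k]]]] /=; rewrite ?mul0r //.
- by rewrite divff // pnatr_eq0.
- by rewrite mulNr divff // pnatr_eq0.
- by rewrite mul1r.
- by rewrite mulN1r.
Qed.

Lemma T4E (i : 'I_4) b g : (b < 4)%N -> (g < 6)%N ->
  T4 R i (o4 b) (pr6 g) = sv (t4N i b g).
Proof.
case: i => i Hi /=.
case: b => [|[|[|[|b]]]] //; case: g => [|[|[|[|[|[|g]]]]]] // => _ _;
case: i Hi => [|[|[|[|i]]]] Hi //; rewrite /T4 /t4N /=; by [].
Qed.
End Low.


Section Low.
Variable R : realType.
Local Notation C := R[i].

Definition KF (T : tensor C 'I_4 'I_4 pair4) : 'M[C]_(24,24) :=
  \matrix_(r < 24, c < 24)
    \sum_(i < 4) sv (coefN (r %/ 4) (c %/ 6) i) * T i (o4 (r %% 4)) (pr6 (c %% 6)).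

Lemma KF4 (r c : 'I_24) : KF (T4 R) r c = (K4Z r c)%:~R.
Proof.
rewrite mxE /K4Z sumN_big rmorph_sum; apply: eq_bigr => i _ /=.
by rewrite T4E ?ltn_pmod // intrM !svZ.
Qed.

Lemma check_at (r r' : 'I_24) :
  sumN 24 (fun c => nv2 (Nc c r) * K4Z r' c) = if (r == r' :> nat) then 2 else 0.
Proof.
have := check_invP; rewrite /check_inv => /allP /(_ r).
rewrite mem_iota add0n ltn_ord => /(_ isT) /allP /(_ r').
by rewrite mem_iota add0n ltn_ord => /(_ isT) /eqP.
Qed.

Lemma Ksum (r r' : 'I_24) :
  \sum_(c < 24) KF (T4 R) r' c * nv (Nc c r) = (r == r')%:R.
Proof.
under eq_bigr => c _ do rewrite KF4 nvZ mulrA -intrM mulrC.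
rewrite -mulr_sumr -rmorph_sum.
have := check_at r r'; rewrite sumN_big.
under eq_bigr => c _ do rewrite mulrC.
move=> ->.
case: (eqVneq r r') => [->|Hne]; rewrite ?eqxx.
  by rewrite /= mulrC divff // pnatr_eq0.
have -> : (nat_of_ord r == r') = false by rewrite -[_ == _]/(r == r') (negbTE Hne).
by rewrite /= mulr0.
Qed.

Lemma inv_id (y : 'rV[C]_24) (r : 'I_24) :
  y 0 r = \sum_(c < 24) (y *m KF (T4 R)) 0 c * nv (Nc c r).
Proof.
have -> : \sum_(c < 24) (y *m KF (T4 R)) 0 c * nv (Nc c r) =
  \sum_(r' < 24) y 0 r' * \sum_(c < 24) KF (T4 R) r' c * nv (Nc c r).
  under eq_bigr => c _ do rewrite mxE mulr_suml.
  rewrite exchange_big /=; apply: eq_bigr => r' _.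
  by rewrite mulr_sumr; apply: eq_bigr => c _; rewrite mulrA.
under eq_bigr => r' _ do rewrite Ksum.
rewrite (bigD1 r) //= eqxx mulr1 big1 ?addr0 // => r' Hr'.
by rewrite eq_sym (negbTE Hr') mulr0.
Qed.
End Low.


Section Low2.
Variable R : realType.
Local Notation C := R[i].

Lemma key (a : 'I_4 -> C) s : (s < 6)%N ->
  \sum_(m < 4) (\sum_(i < 4) sv (coefN s m i) * a i) * ((-1) ^+ m * a m) = 0.
Proof.
case: s => [|[|[|[|[|[|s]]]]]] // _;
rewrite !big_ord_recr !big_ord0 /= /coefN /=; ring.
Qed.


Definition r1 (a b : 'I_4 -> C) (c : pair4 -> C) : tensor C 'I_4 'I_4 pair4 :=
  fun i j k => a i * b j * c k.

Lemma rank_r1 a b c : (\rank (KF (r1 a b c)) <= 3)%N.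
Proof.
pose X : 'M[C]_(24, 4) := \matrix_(r < 24, m < 4)
  ((\sum_(i < 4) sv (coefN (r %/ 4) m i) * a i) * b (o4 (r %% 4))).
pose Y : 'M[C]_(4, 24) := \matrix_(m < 4, k < 24)
  (if (m == (k %/ 6)%N :> nat) then c (pr6 (k %% 6)) else 0).
have -> : KF (r1 a b c) = X *m Y.
  apply/matrixP => r k; rewrite !mxE.
  have Hk : ((k %/ 6)%N < 4)%N by rewrite ltn_divLR.
  rewrite [RHS](bigD1 (Ordinal Hk)) //= [X in _ + X]big1 ?addr0; last first.
    move=> m Hm; rewrite [Y m k]mxE; case: ifP => [/eqP E|_]; last by rewrite mulr0.
    by case/eqP: Hm; apply: val_inj.
  rewrite [X _ _]mxE [Y _ _]mxE /= eqxx !mulr_suml; apply: eq_bigr => i _.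
  by rewrite /r1; ring.
apply: leq_trans (mxrankM_maxl _ _) _.
pose v : 'cV[C]_4 := \col_(m < 4) ((-1) ^+ m * a m).
have Xv : X *m v = 0.
  apply/matrixP => r z; rewrite !mxE.
  under eq_bigr => m _ do rewrite !mxE mulrAC.
  rewrite -mulr_suml key ?mul0r //.
  by rewrite ltn_divLR.
case: (eqVneq v 0) => [v0|vn0].
  have -> : X = 0.
    apply/matrixP => r m; rewrite !mxE; apply/eqP; rewrite mulf_eq0; apply/orP; left.
    apply/eqP; apply: big1 => i _.
    have := congr1 (fun M : 'cV[C]_4 => M i 0) v0; rewrite !mxE.
    move/eqP; rewrite mulf_eq0 signr_eq0 /= => /eqP ->; by rewrite mulr0.
  by rewrite mxrank0.
have H1 : (v^T <= kermx X^T)%MS by apply/sub_kermxP; rewrite -trmx_mul Xv trmx0.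
have := mxrankS H1; rewrite mxrank_ker.
have : (\rank v^T != 0)%N by rewrite mxrank_eq0 trmx_eq0.
rewrite !mxrank_tr; move: (rank_leq_col X); lia.
Qed.
End Low2.


Section Low3.
Variable R : realType.
Local Notation C := R[i].

Lemma rank_sum n (A : 'I_n -> 'M[C]_(24,24)) :
  (\rank (\sum_(l < n) A l)%R <= \sum_(l < n) \rank (A l))%N.
Proof.
elim: n A => [|n IH] A; first by rewrite !big_ord0 mxrank0.
rewrite !big_ord_recr /=; apply: leq_trans (mxrank_add _ _) _.
by rewrite leq_add2r; exact: IH.
Qed.

Lemma sv_norm k : `|sv k : C| <= 1.
Proof. by case: k => [|[|k]] /=; rewrite ?normr0 ?normrN ?normr1. Qed.

Lemma nv_norm k : `|nv k : C| <= 1.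
Proof.
have h : `|2^-1 : C| <= 1.
  rewrite ger0_norm ?invr_ge0 ?ler0n // invf_le1 ?ltr0n // ler1n //.
by case: k => [|[|[|[|k]]]] /=; rewrite ?normr0 ?normrN ?normr1.
Qed.

Lemma lower (r : nat) : border_rank_le r (T4 R) -> (8 <= r)%N.
Proof.
move=> H; rewrite leqNgt; apply/negP => Hr.
pose eps : C := (2%:R * 4%:R * 24%:R * 24%:R)^-1.
have eps_gt0 : 0 < eps by rewrite invr_gt0 !mulr_gt0 ?ltr0n.
have [T' [[a [b [c HT']]] Hclose]] := H eps eps_gt0.
pose K := KF T'.
have KFsum : K = \sum_(l < r) KF (r1 (a l) (b l) (c l)).
  apply/matrixP => p q; rewrite summxE !mxE.
  under eq_bigr => k _ do rewrite HT' mulr_sumr.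
  rewrite exchange_big; apply: eq_bigr => l _; rewrite mxE.
  by apply: eq_bigr => k _.
have rankK : (\rank K <= 21)%N.
  rewrite KFsum; have H1 := rank_sum (fun l => KF (r1 (a l) (b l) (c l))).
  have H2 : (\sum_(l < r) \rank (KF (r1 (a l) (b l) (c l))) <= \sum_(l < r) 3)%N.
    by apply: leq_sum => l _; exact: rank_r1.
  move: H2; rewrite sum_nat_const card_ord => H2; lia.
have ker : kermx K != 0.
  rewrite -mxrank_eq0 mxrank_ker; apply/eqP => E; move: E rankK; lia.
have [i Hi] : exists i, row i (kermx K) != 0.
  case: (pickP (fun i => row i (kermx K) != 0)) => [i Hi|Hn]; first by exists i.
  case/eqP: ker; apply/row_matrixP => j; rewrite row0.
  by have := Hn j; move/negbFE/eqP.
pose y := row i (kermx K).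
have yK : y *m K = 0 by rewrite -row_mul mulmx_ker row0.
pose E : tensor C 'I_4 'I_4 pair4 := fun i j k => T' i j k - T4 R i j k.
have KE : K = KF (T4 R) + KF E.
  apply/matrixP => p q; rewrite !mxE -big_split; apply: eq_bigr => k _.
  rewrite /E; set u := sv _; set v := T' _ _ _; set w := T4 R _ _ _.
  by apply: (@eq_trans _ _ (u * w + u * (v - w))); first ring.
have z_eq : y *m KF (T4 R) = - (y *m KF E).
  by apply/eqP; rewrite -addr_eq0 -mulmxDr -KE yK.
pose s := \sum_(p < 24) `|y 0 p|.
have s_ge0 : 0 <= s by apply: sumr_ge0 => p _.
have bE : forall p q, `|KF E p q| <= 4%:R * eps.
  move=> p q; rewrite mxE; apply: le_trans (ler_norm_sum _ _ _) _.
  have -> : 4%:R * eps = \sum_(k < 4) eps by rewrite sumr_const card_ord mulr_natl.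
  apply: ler_sum => k _; rewrite normrM -[eps]mul1r.
  apply: ler_pM => //; first exact: sv_norm.
  by rewrite /E distrC; apply: ltW; apply: Hclose.
have bz : forall q, `|(y *m KF E) 0 q| <= 4%:R * eps * s.
  move=> q; rewrite mxE; apply: le_trans (ler_norm_sum _ _ _) _.
  rewrite /s mulr_sumr; apply: ler_sum => p _; rewrite normrM mulrC.
  by apply: ler_wpM2r => //; apply: bE.
have by_ : forall p, `|y 0 p| <= (4%:R * eps * s) *+ 24.
  move=> p; rewrite inv_id; apply: le_trans (ler_norm_sum _ _ _) _.
  apply: le_trans (_ : _ <= \sum_(q < 24) (4%:R * eps * s)) _; last first.
    by rewrite sumr_const card_ord.
  apply: ler_sum => q _; rewrite normrM -[X in _ <= X]mulr1.
  apply: ler_pM => //; last exact: nv_norm.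
  by rewrite z_eq mxE normrN; apply: bz.
have s_le : s <= s / 2%:R.
  apply: le_trans (_ : _ <= \sum_(p < 24) ((4%:R * eps * s) *+ 24)) _.
    by apply: ler_sum => p _; apply: by_.
  rewrite sumr_const card_ord -(mulr_natl ((4%:R * eps * s) *+ 24) 24) -(mulr_natl (4%:R * eps * s) 24) /eps.
  rewrite le_eqVlt; apply/orP; left; apply/eqP; field.
  by [].
have s0 : s = 0.
  apply/eqP; rewrite eq_le s_ge0 andbT.
  have h : s / 2%:R + s / 2%:R <= 0 + s / 2%:R by rewrite -splitr add0r.
  by rewrite lerD2r pmulr_lle0 ?invr_gt0 ?ltr0n in h.
have y0 : y = 0.
  have hy : forall p, `|y 0 p| = 0.
    move=> p; exact: (@psumr_eq0P _ _ xpredT (fun q => `|y 0 q|) (fun q _ => normr_ge0 _) s0 p).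
  apply/rowP => p; rewrite [RHS]mxE; apply/eqP; rewrite -normr_eq0; apply/eqP; exact: hy p.
case/negP: Hi; by rewrite -/y y0.
Qed.
End Low3.


Section Up.
Variable R : realType.
Local Notation C := R[i].

Definition Adef (l i : nat) (t : C) : C :=
  match l, i with
  | 0, 0 => (1%:R)
  | 1, 0 => (1%:R)
  | 1, 2 => (1%:R * t ^+ 4)
  | 2, 0 => (1%:R)
  | 2, 3 => (1%:R * t ^+ 4)
  | 3, 1 => (1%:R) + (4%:R * t ^+ 1)
  | 3, 2 => (4%:R * t ^+ 1)
  | 4, 1 => (1%:R) + (4%:R * t ^+ 1)
  | 4, 2 => (4%:R * t ^+ 1) + (1%:R * t ^+ 4)
  | 5, 1 => (1%:R) + (4%:R * t ^+ 1)
  | 5, 2 => (4%:R * t ^+ 1)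
  | 5, 3 => (1%:R * t ^+ 4) + (4%:R * t ^+ 5)
  | 6, 0 => (1%:R) + (3%:R * t ^+ 1)
  | 6, 1 => (1%:R)
  | 6, 3 => (-4%:R * t ^+ 1)
  | 7, 0 => (1%:R) + (3%:R * t ^+ 1)
  | 7, 1 => (-1%:R)
  | 7, 2 => (-4%:R * t ^+ 1)
  | _, _ => 0 end.

Definition Bdef (l i : nat) (t : C) : C :=
  match l, i with
  | 0, 0 => (1%:R)
  | 1, 0 => (1%:R)
  | 1, 2 => (-1%:R * t ^+ 4) + (-3%:R * t ^+ 5)
  | 1, 3 => (-3%:R * t ^+ 5)
  | 2, 0 => (1%:R)
  | 2, 3 => (-1%:R * t ^+ 4)
  | 3, 1 => (1%:R) + (-4%:R * t ^+ 1)
  | 3, 2 => (-4%:R * t ^+ 1)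
  | 4, 1 => (1%:R) + (-4%:R * t ^+ 1)
  | 4, 2 => (-4%:R * t ^+ 1) + (-1%:R * t ^+ 4) + (-8%:R * t ^+ 5)
  | 5, 1 => (1%:R) + (-4%:R * t ^+ 1) + (-8%:R * t ^+ 5)
  | 5, 2 => (-4%:R * t ^+ 1)
  | 5, 3 => (-1%:R * t ^+ 4) + (4%:R * t ^+ 5)
  | 6, 0 => (1%:R)
  | 6, 1 => (-1%:R)
  | 6, 2 => (4%:R * t ^+ 1)
  | 7, 0 => (1%:R)
  | 7, 1 => (1%:R)
  | 7, 3 => (4%:R * t ^+ 1)
  | _, _ => 0 end.

Definition Cdef (l i : nat) (t : C) : C :=
  match l, i with
  | 0, 0 => (1%:R)
  | 0, 1 => (1%:R * t ^- 4)
  | 0, 2 => (1%:R * t ^- 4)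
  | 0, 4 => (2%:R * t ^- 4) + ((1%:R / 2%:R) * t ^- 1) + ((3%:R / 2%:R))
  | 0, 5 => ((1%:R / 8%:R) * t ^- 6) + (-2%:R * t ^- 4) + ((1%:R / 32%:R) * t ^- 3) + ((3%:R / 32%:R) * t ^- 2) + (-(1%:R / 2%:R) * t ^- 1) + (-(3%:R / 2%:R))
  | 1, 1 => (-1%:R * t ^- 4)
  | 1, 4 => (-1%:R * t ^- 4)
  | 1, 5 => (-(1%:R / 16%:R) * t ^- 6) + (1%:R * t ^- 4)
  | 2, 2 => (-1%:R * t ^- 4)
  | 2, 4 => (-1%:R * t ^- 4)
  | 2, 5 => (-(1%:R / 16%:R) * t ^- 6) + (1%:R * t ^- 4)
  | 3, 0 => (-1%:R)
  | 3, 3 => (1%:R * t ^- 4)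
  | 3, 4 => (-1%:R * t ^- 4) + (-(1%:R / 2%:R) * t ^- 1)
  | 3, 5 => (-(1%:R / 8%:R) * t ^- 6) + ((1%:R / 4%:R) * t ^- 5) + (-(1%:R / 32%:R) * t ^- 3) + ((1%:R / 2%:R) * t ^- 1) + (2%:R)
  | 4, 3 => (-1%:R * t ^- 4)
  | 4, 4 => (1%:R * t ^- 4)
  | 4, 5 => ((1%:R / 16%:R) * t ^- 6) + (-(1%:R / 4%:R) * t ^- 5)
  | 5, 5 => ((1%:R / 16%:R) * t ^- 6)
  | 6, 0 => (-1%:R)
  | 6, 4 => (-(1%:R / 4%:R) * t ^- 1)
  | 6, 5 => (-(1%:R / 64%:R) * t ^- 3) + ((1%:R / 4%:R) * t ^- 1)
  | 7, 4 => (-(1%:R / 4%:R) * t ^- 1)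
  | 7, 5 => (-(1%:R / 64%:R) * t ^- 3) + ((1%:R / 4%:R) * t ^- 1)
  | _, _ => 0 end.

Definition qtab : list (list nat) := [::
  [:: 97; 0; 0; 0; 0];
  [:: 0; 0; 0; 0; 0];
  [:: 0; 0; 0; 0; 0];
  [:: 0; 0; 0; 0; 0];
  [:: 0; 0; 0; 0; 0];
  [:: 0; 0; 0; 0; 0];
  [:: 96; 0; 0; 0; 0];
  [:: 0; 0; 0; 0; 0];
  [:: 0; 0; 0; 0; 0];
  [:: 0; 0; 0; 0; 0];
  [:: 0; 0; 0; 0; 0];
  [:: 0; 0; 0; 0; 0];
  [:: 129; 385; 0; 0; 0];
  [:: 96; 0; 0; 0; 0];
  [:: 0; 0; 0; 0; 0];
  [:: 0; 0; 0; 0; 0];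
  [:: 0; 0; 0; 0; 0];
  [:: 0; 0; 0; 0; 0];
  [:: 0; 0; 0; 0; 0];
  [:: 96; 0; 0; 0; 0];
  [:: 0; 0; 0; 0; 0];
  [:: 0; 0; 0; 0; 0];
  [:: 0; 0; 0; 0; 0];
  [:: 0; 0; 0; 0; 0];
  [:: 0; 0; 0; 0; 0];
  [:: 0; 0; 0; 0; 0];
  [:: 0; 0; 0; 0; 0];
  [:: 0; 0; 0; 0; 0];
  [:: 0; 0; 0; 0; 0];
  [:: 0; 0; 0; 0; 0];
  [:: 0; 512; 0; 0; 0];
  [:: 0; 0; 0; 0; 0];
  [:: 0; 0; 0; 0; 0];
  [:: 0; 0; 0; 0; 0];
  [:: 256; 0; 0; 0; 0];
  [:: 257; 1025; 0; 0; 0];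
  [:: 0; 512; 0; 0; 0];
  [:: 0; 0; 0; 0; 0];
  [:: 0; 0; 0; 0; 0];
  [:: 384; 1024; 0; 0; 0];
  [:: 129; 1025; 0; 0; 0];
  [:: 257; 1025; 0; 0; 0];
  [:: 0; 0; 0; 0; 0];
  [:: 0; 0; 0; 0; 0];
  [:: 0; 0; 0; 0; 0];
  [:: 0; 0; 0; 0; 0];
  [:: 0; 0; 0; 0; 0];
  [:: 0; 0; 0; 0; 0];
  [:: 0; 0; 0; 0; 0];
  [:: 0; 0; 0; 0; 0];
  [:: 0; 0; 0; 0; 0];
  [:: 0; 0; 0; 0; 0];
  [:: 0; 0; 0; 0; 0];
  [:: 0; 0; 0; 0; 0];
  [:: 129; 512; 0; 0; 0];
  [:: 0; 0; 0; 0; 0];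
  [:: 0; 0; 0; 0; 0];
  [:: 128; 0; 0; 0; 0];
  [:: 128; 0; 0; 0; 0];
  [:: 0; 1025; 0; 0; 0];
  [:: 0; 512; 0; 0; 0];
  [:: 0; 0; 0; 32; 96];
  [:: 0; 0; 0; 0; 0];
  [:: 256; 1024; 0; 32; 256];
  [:: 0; 1025; 0; 0; 161];
  [:: 0; 1025; 3; 32; 97];
  [:: 0; 0; 0; 0; 0];
  [:: 0; 0; 0; 0; 96];
  [:: 0; 0; 0; 0; 0];
  [:: 0; 0; 0; 0; 0];
  [:: 128; 0; 0; 0; 96];
  [:: 129; 0; 6; 0; 97];
  [:: 128; 0; 0; 0; 0];
  [:: 0; 0; 0; 0; 0];
  [:: 0; 0; 0; 0; 0];
  [:: 0; 0; 0; 0; 0];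
  [:: 0; 0; 0; 0; 0];
  [:: 0; 0; 0; 0; 0];
  [:: 129; 0; 0; 0; 0];
  [:: 0; 0; 0; 0; 0];
  [:: 0; 0; 0; 0; 0];
  [:: 0; 0; 0; 0; 0];
  [:: 0; 0; 0; 0; 0];
  [:: 0; 0; 17; 65; 0];
  [:: 0; 512; 0; 0; 0];
  [:: 0; 0; 0; 0; 0];
  [:: 0; 0; 0; 0; 0];
  [:: 0; 0; 0; 0; 0];
  [:: 128; 0; 0; 0; 0];
  [:: 129; 0; 0; 0; 0];
  [:: 0; 0; 0; 0; 0];
  [:: 0; 0; 0; 0; 0];
  [:: 0; 0; 0; 32; 0];
  [:: 0; 0; 0; 0; 0];
  [:: 0; 0; 0; 32; 0];
  [:: 0; 0; 0; 0; 0]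
].

Definition Tapp (t : C) (i j g : nat) : C :=
  Adef 0 i t * Bdef 0 j t * Cdef 0 g t + Adef 1 i t * Bdef 1 j t * Cdef 1 g t +
  Adef 2 i t * Bdef 2 j t * Cdef 2 g t + Adef 3 i t * Bdef 3 j t * Cdef 3 g t +
  Adef 4 i t * Bdef 4 j t * Cdef 4 g t + Adef 5 i t * Bdef 5 j t * Cdef 5 g t +
  Adef 6 i t * Bdef 6 j t * Cdef 6 g t + Adef 7 i t * Bdef 7 j t * Cdef 7 g t.

Definition qv (c : nat) : C := (if odd c then -1 else 1) * ((c./2)%:R / 16%:R).
Definition qc (i j g n : nat) : nat := nth 0%N (nth [::] qtab (i * 24 + j * 6 + g)) n.
Definition Qd (i j g : nat) (t : C) : C :=
  qv (qc i j g 0) + t * (qv (qc i j g 1) + t * (qv (qc i j g 2) +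
    t * (qv (qc i j g 3) + t * qv (qc i j g 4)))).

Lemma entry_id (t : C) : t != 0 -> forall i j g, (i < 4)%N -> (j < 4)%N -> (g < 6)%N ->
  Tapp t i j g = sv (t4N i j g) + t * Qd i j g t.
Proof.
move=> t0 i j g.
case: i => [|[|[|[|i]]]] //; case: j => [|[|[|[|j]]]] //;
case: g => [|[|[|[|[|[|g]]]]]] // => _ _ _;
rewrite /Tapp /Qd /qc /qv /=; field; rewrite ?expf_neq0 ?t0 // .
Qed.

End Up.
Arguments qv {R} c.


Section Up2.
Variable R : realType.
Local Notation C := R[i].
Definition qcheck : bool :=
  all (fun i => all (fun j => all (fun g =>
    ((qc i j g 0)./2 + (qc i j g 1)./2 + (qc i j g 2)./2 + (qc i j g 3)./2 + (qc i j g 4)./2 <= 784)%N)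
    (iota 0 6)) (iota 0 4)) (iota 0 4).

Lemma qcheckP : qcheck = true.
Proof. vm_compute. reflexivity. Qed.

Lemma qv_norm c : `|qv c : C| = (c./2)%:R / 16%:R.
Proof.
rewrite /qv normrM.
have -> : `|(if odd c then -1 else 1 : C)| = 1 by case: (odd c); rewrite ?normrN normr1.
by rewrite mul1r ger0_norm // divr_ge0 // ler0n.
Qed.

Lemma horner5 (t a0 a1 a2 a3 a4 : C) : `|t| <= 1 ->
  `|a0 + t * (a1 + t * (a2 + t * (a3 + t * a4)))| <=
  `|a0| + (`|a1| + (`|a2| + (`|a3| + `|a4|))).
Proof.
move=> t1.
have h : forall a b, `|a + t * b| <= `|a| + `|b|.
  move=> a b; apply: le_trans (ler_normD _ _) _; rewrite lerD2l normrM.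
  by apply: ler_piMl.
apply: le_trans (h _ _) _; rewrite lerD2l.
apply: le_trans (h _ _) _; rewrite lerD2l.
apply: le_trans (h _ _) _; rewrite lerD2l.
exact: h.
Qed.

Lemma Qd_bound (t : C) i j g : `|t| <= 1 -> (i < 4)%N -> (j < 4)%N -> (g < 6)%N ->
  `|Qd i j g t| <= 49%:R.
Proof.
move=> t1 Hi Hj Hg.
apply: le_trans (horner5 _ _ _ _ _ t1) _.
rewrite !qv_norm -!mulrDl -!natrD.
have := qcheckP; rewrite /qcheck => /allP /(_ i); rewrite mem_iota add0n => /(_ Hi).
move=> /allP /(_ j); rewrite mem_iota add0n => /(_ Hj).
move=> /allP /(_ g); rewrite mem_iota add0n => /(_ Hg) H.
rewrite ler_pdivrMr ?ltr0n // -natrM ler_nat.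
move: H; rewrite !addnA; lia.
Qed.
End Up2.


Lemma o4K (j : 'I_4) : o4 j = j.
Proof. by case: j => [[|[|[|[|j]]]] Hj] //; apply: val_inj. Qed.

Definition idx (k : pair4) : nat :=
  let: (p, q) := val k in
  if (p == 0 :> nat) then (q : nat).-1 else if (p == 1 :> nat) then (q : nat).+1 else 5%N.

Lemma idx_lt k : (idx k < 6)%N.
Proof.
case: k => [[[p Hp] [q Hq]] H]; rewrite /idx /=.
by case: p Hp H => [|[|[|[|p]]]] Hp //; case: q Hq => [|[|[|[|q]]]] Hq.
Qed.

Lemma pr6_idx k : pr6 (idx k) = k.
Proof.
case: k => [[[p Hp] [q Hq]] H]; apply: val_inj => /=.
case: p Hp H => [|[|[|[|p]]]] Hp //; case: q Hq => [|[|[|[|q]]]] Hq // H;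
  (try by move: H); rewrite /idx /=; congr pair.
all: apply: val_inj; reflexivity.
Qed.

Section Up3.
Variable R : realType.
Local Notation C := R[i].

Lemma upper : border_rank_le 8 (T4 R).
Proof.
move=> eps eps0.
have pos : 0 < 50%:R * (1 + eps) :> C by rewrite mulr_gt0 ?ltr0n ?addr_gt0 ?ltr01.
pose t : C := eps / (50%:R * (1 + eps)).
have t0 : 0 < t by rewrite divr_gt0.
have t1 : t <= 1.
  rewrite ler_pdivrMr // mul1r mulrDr mulr1; apply: ler_wpDl; first by rewrite ler0n.
  by rewrite ler_peMl ?ltW // ?ler1n ?ltr1n.
have t49 : 49%:R * t < eps.
  rewrite /t mulrA ltr_pdivrMr // [eps * _]mulrC ltr_pM2r // mulrDr mulr1.
  apply: lt_le_trans (_ : 49%:R < 50%:R) _; first by rewrite ltr_nat.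
  by apply: ler_wpDr; rewrite ?ler0n // mulr_ge0 ?ler0n ?ltW.
exists (fun (i j : 'I_4) k => Tapp t i j (idx k)); split.
  exists (fun (l : 'I_8) (i : 'I_4) => Adef l i t), (fun (l : 'I_8) (j : 'I_4) => Bdef l j t), (fun (l : 'I_8) k => Cdef l (idx k) t).
  by move=> i j k; rewrite /Tapp !big_ord_recr big_ord0 /= add0r.
move=> i j k.
have -> : T4 R i j k = sv (t4N i j (idx k)).
  by rewrite -{1}(pr6_idx k) -{1}(o4K j) T4E // idx_lt.
rewrite entry_id ?ltn_ord ?idx_lt ?lt0r_neq0 // opprD addrA subrr add0r normrN normrM.
rewrite (gtr0_norm t0); apply: le_lt_trans t49.
rewrite [_ * t]mulrC; apply: ler_wpM2l; first exact: ltW.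
by apply: Qd_bound; rewrite ?ltn_ord ?idx_lt // gtr0_norm.
Qed.
End Up3.


Theorem proposition6 (R : realType) :
  border_rank_le 8 (T4 R) /\
  (forall r : nat, border_rank_le r (T4 R) -> (8 <= r)%N).
Proof. split; [exact: upper | exact: lower]. Qed.
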